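(* Let $\Omega \subset \mathbb{R}^d$ with $d \ge 3$ be a bounded Lipschitz domain. Define the conformal Killing space $$\mathbf{CK}\coloneqq\{\boldsymbol{u}:\ \boldsymbol{u}(\mathbf{x}) = \mathbf{a} + \lambda\mathbf{x} + A\mathbf{x} + 2(\mathbf{b}\cdot\mathbf{x})\mathbf{x} - \|\mathbf{x}\|^2\mathbf{b}\ \text{ for } \mathbf{x}\in\Omega\},$$ where $\mathbf{a}, \mathbf{b} \in \mathbb{R}^d$, $\lambda \in \mathbb{R}$, and $A \in \mathbb{R}^{d\times d}$ is skew-symmetric. If $\boldsymbol{\varphi}\in \mathbf{CK}$ satisfies $\boldsymbol{\varphi}|_{\partial\Omega}=\mathbf{0}$, then $\boldsymbol{\varphi}=\mathbf{0}$ in $\Omega$.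
   Context: $\|\mathbf{x}\|$ denotes the Euclidean norm of $\mathbf{x}\in\mathbb{R}^d$. *)

(* Defs.v *)
From HB Require Import structures.
From mathcomp Require Import all_boot all_order all_algebra.
From mathcomp Require Import all_classical all_reals all_analysis.
Set Implicit Arguments. Unset Strict Implicit. Unset Printing Implicit Defensive.
Import Order.TTheory GRing.Theory Num.Theory.
Import numFieldNormedType.Exports.
Local Open Scope classical_set_scope.
Local Open Scope ring_scope.

Section Defs.
Variable R : realType.

Definition dotv (d : nat) (x y : 'rV[R]_d) : R := \sum_(i < d) x ord0 i * y ord0 i.
Definition sqnorm (d : nat) (x : 'rV[R]_d) : R := dotv x x.
Definition enorm (d : nat) (x : 'rV[R]_d) : R := Num.sqrt (sqnorm x).

Definition bdry (d : nat) (O : set 'rV[R]_d) : set 'rV[R]_d :=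
  closure O `\` interior O.

Definition is_last (d : nat) (j : 'I_d) : bool := (j : nat) == d.-1.

(* Bounded Lipschitz domain (Grisvard's definition): nonempty, open, connected,
   bounded, and near each boundary point p, after an orthogonal change of
   coordinates y = (x - p) Q, Omega coincides inside the box
   { |y_j| < a_j } with the region below the graph y_d < g(y') of a Lipschitz
   function g of the first d-1 coordinates y', with |g(y')| <= a_d / 2. *)
Definition bounded_lipschitz_domain (d : nat) (O : set 'rV[R]_d) : Prop :=
  [/\ O !=set0, open O, connected O, bounded_set O &
   forall p, bdry O p ->
   exists (Q : 'M[R]_d) (a : 'rV[R]_d) (g : 'rV[R]_d -> R) (L : R),
     [/\ Q *m Q^T = 1%:M /\ (forall j, 0 < a ord0 j),
         (forall y z : 'rV[R]_d,
            (forall j, ~~ is_last j -> y ord0 j = z ord0 j) -> g y = g z),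
         (forall y z : 'rV[R]_d, `|g y - g z| <= L * enorm (y - z)),
         (forall y : 'rV[R]_d,
            (forall j, ~~ is_last j -> `|y ord0 j| < a ord0 j) ->
            forall j, is_last j -> `|g y| <= a ord0 j / 2) &
         (forall x : 'rV[R]_d,
            let y := (x - p) *m Q in
            (forall j, `|y ord0 j| < a ord0 j) ->
            (O x <-> forall j, is_last j -> y ord0 j < g y))]].

(* The conformal Killing field with parameters a, b, lambda, A :
   u(x) = a + lambda x + A x + 2 (b.x) x - ||x||^2 b
   (row-vector convention: A x is written x *m A^T). *)
Definition ck_field (d : nat) (a b : 'rV[R]_d) (lam : R) (A : 'M[R]_d)
  (x : 'rV[R]_d) : 'rV[R]_d :=
  a + lam *: x + x *m A^T + (2 * dotv b x) *: x - sqnorm x *: b.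

(* membership in the conformal Killing space CK (u given by the polynomial
   formula, which is also its continuous extension to the closure) *)
Definition in_CK (d : nat) (u : 'rV[R]_d -> 'rV[R]_d) : Prop :=
  exists (a b : 'rV[R]_d) (lam : R) (A : 'M[R]_d),
    A^T = - A /\ forall x, u x = ck_field a b lam A x.

End Defs.

(* Main.v *)
From HB Require Import structures.
From mathcomp Require Import all_boot all_order all_algebra.
From mathcomp Require Import all_classical all_reals all_analysis.
Require Import Defs.
From mathcomp Require Import lra ring.
Import Order.TTheory GRing.Theory Num.Theory.
Import numFieldNormedType.Exports.
Local Open Scope classical_set_scope.
Local Open Scope ring_scope.
Lemma ray_exit {R : realType} {d : nat} {O : set 'rV[R]_d} {x0 v : 'rV[R]_d} :
  open O -> bounded_set O -> O x0 -> v != 0 ->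
  exists t, 0 < t /\ bdry O (x0 + t *: v).
Proof.
move=> oO bO Ox0 v0.
have [M HM] : exists M : R, forall y, O y -> `|y| <= M.
  move: bO => /= bO; have [M HM] : exists M : R, globally O [set x | `|x| <= M] := @filter_ex R _ _ _ bO; by exists M => y /HM.
have nv : 0 < `|v| by rewrite normr_gt0.
have dist : forall s t : R, `|(x0 + s *: v) - (x0 + t *: v)| = `|s - t| * `|v|.
  move=> s t; rewrite opprD addrACA subrr add0r -scalerBl normrZ //.
have ballO : forall p, O p -> exists2 e : R, 0 < e & forall y, `|p - y| < e -> O y.
  move=> p Op; have : nbhs p O by move: oO; rewrite openE => /(_ p Op).
  by move/nbhs_normP => [e /= e0 He]; exists e => // y Hy; apply: He.
pose S := [set t : R | 0 <= t /\ O (x0 + t *: v)].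
have S0 : S 0 by split => //; rewrite scale0r addr0.
have supS : has_sup S.
  split; first by exists 0.
  exists ((M + `|x0|) / `|v|) => t [t0 Ot].
  rewrite ler_pdivlMr //.
  have := HM _ Ot.
  have : `|t *: v| <= `|x0 + t *: v| + `|x0|.
    by have := ler_normB (x0 + t *: v) x0; rewrite addrAC subrr add0r.
  rewrite normrZ ger0_norm //; lra.
set T := sup S.
have [e e0 He] := ballO _ Ox0.
have Tpos : 0 < T.
  have Sh : S (e / (2 * `|v|)).
    split; first by apply: divr_ge0; [lra|]; rewrite mulr_ge0.
    apply: He; rewrite -{1}(addr0 x0) -(scale0r v) dist sub0r normrN.
    rewrite ger0_norm; last by apply: divr_ge0; [lra|]; rewrite mulr_ge0.
    rewrite invfM mulrA divfK ?gt_eqF //; lra.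
  apply: (lt_le_trans _ (sup_upper_bound supS Sh)).
  by apply: divr_gt0 => //; rewrite mulr_gt0.
exists T; split => //; split.
- move=> B /nbhs_normP [r /= r0 Hr].
  have [t [t0 Ot] Ht] := sup_adherent (divr_gt0 r0 nv) supS.
  have tT : t <= T := sup_upper_bound supS (conj t0 Ot).
  exists (x0 + t *: v); split => //; apply: Hr => /=.
  rewrite dist ger0_norm ?subr_ge0 // -ltr_pdivlMr //; move: Ht; rewrite -/T; lra.
- have -> : O° = O by apply/interior_id.
  move=> /ballO [r r0 Hr].
  have St : S (T + r / (2 * `|v|)).
    have q : 0 <= r / (2 * `|v|) by apply: divr_ge0; [lra|]; rewrite mulr_ge0.
    split; first by lra.
    apply: Hr; rewrite dist opprD addrA subrr sub0r normrN ger0_norm //.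
    rewrite invfM mulrA divfK ?gt_eqF //; lra.
  have := sup_upper_bound supS St.
  have : 0 < r / (2 * `|v|) by apply: divr_gt0 => //; rewrite mulr_gt0.
  rewrite -/T; lra.
Qed.
Section Alg.
Variable R : realType.
Variable d : nat.
Implicit Types (x y v b : 'rV[R]_d).

Lemma dotvDr b x v (t : R) : dotv b (x + t *: v) = dotv b x + t * dotv b v.
Proof.
rewrite /dotv mulr_sumr -big_split /=; apply: eq_bigr => k _.
rewrite !mxE; ring.
Qed.

Lemma dotvC x y : dotv x y = dotv y x.
Proof. by rewrite /dotv; apply: eq_bigr => k _; rewrite mulrC. Qed.

Lemma sqnormD x v (t : R) :
  sqnorm (x + t *: v) = sqnorm x + 2 * t * dotv x v + t ^+ 2 * sqnorm v.
Proof.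
rewrite /sqnorm /dotv !mulr_sumr -!big_split /=; apply: eq_bigr => k _.
rewrite !mxE; ring.
Qed.

Lemma ck_line (a b : 'rV[R]_d) lam (A : 'M[R]_d) x v (i : 'I_d) :
  exists beta, forall t : R,
    ck_field a b lam A (x + t *: v) ord0 i =
    (2 * dotv b v * v ord0 i - sqnorm v * b ord0 i) * t ^+ 2 + beta * t
    + ck_field a b lam A x ord0 i.
Proof.
exists (lam * v ord0 i + (v *m A^T) ord0 i
        + 2 * (dotv b x * v ord0 i + dotv b v * x ord0 i)
        - 2 * dotv x v * b ord0 i) => t.
rewrite /ck_field dotvDr sqnormD mulmxDl -scalemxAl !mxE; ring.
Qed.


Lemma sum_delta2 (F : 'I_d -> R) (i j : 'I_d) (s : R) : i != j ->
  \sum_(k < d) F k * ((k == i)%:R + s * (k == j)%:R) = F i + s * F j.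
Proof.
move=> ij.
rewrite (bigD1 i) //= (bigD1 j) 1?eq_sym //= big1 ?addr0.
  by rewrite eqxx eq_sym (negbTE ij) eqxx /=; ring.
by move=> k /andP [ki kj]; rewrite (negbTE ki) (negbTE kj) /=; ring.
Qed.

Lemma exists_s (bi bj : R) : exists s : R, 2 * (bi + s * bj) - (1 + s * s) * bi = 0.
Proof.
have [->|bi0] := eqVneq bi 0; first by exists 0; ring.
set r := Num.sqrt (bi ^+ 2 + bj ^+ 2).
have hs : r ^+ 2 = bi ^+ 2 + bj ^+ 2.
  by rewrite sqr_sqrtr // addr_ge0 // sqr_ge0.
exists ((bj + r) / bi); set s := (bj + r) / bi.
have e : s * bi = bj + r by rewrite divfK.
apply: (mulfI bi0); rewrite mulr0.
have -> : bi * (2 * (bi + s * bj) - (1 + s * s) * bi)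
   = bi ^+ 2 + 2 * (s * bi) * bj - (s * bi) ^+ 2 by ring.
rewrite e.
have -> : bi ^+ 2 + 2 * (bj + r) * bj - (bj + r) ^+ 2 = bi ^+ 2 + bj ^+ 2 - r ^+ 2 by ring.
by rewrite hs subrr.
Qed.

End Alg.
Arguments exists_s {R}. Arguments sum_delta2 {R d}. Arguments ck_line {R d}.

Theorem mainTheorem1 (R : realType) (d : nat) (Omega : set 'rV[R]_d)
  (phi : 'rV[R]_d -> 'rV[R]_d) :
  (3 <= d)%N ->
  bounded_lipschitz_domain Omega ->
  in_CK phi ->
  (forall x, bdry Omega x -> phi x = 0) ->
  forall x, Omega x -> phi x = 0.
Proof.
move=> d3 [_ oO _ bO _] [a [b [lam [A [_ Hphi]]]]] Hb x Ox.
apply/rowP => i; rewrite mxE.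
have [j ji] : exists j : 'I_d, j != i.
  have h0 : (0 < d)%N by apply: leq_trans d3.
  have h1 : (1 < d)%N by apply: leq_trans d3.
  case: (eqVneq i (Ordinal h0)) => [-> | ne].
    by exists (Ordinal h1).
  by exists (Ordinal h0); rewrite eq_sym.
have [s hs] := exists_s (b ord0 i) (b ord0 j).
pose v : 'rV[R]_d := \row_k ((k == i)%:R + s * (k == j)%:R).
have vi : v ord0 i = 1 by rewrite mxE eqxx eq_sym (negbTE ji) /=; ring.
have vj : v ord0 j = s by rewrite mxE eqxx (negbTE ji) /=; ring.
have v0 : v != 0.
  apply/eqP => v0; move: vi; rewrite v0 mxE => /eqP; by rewrite eq_sym oner_eq0.
have ij : i != j by rewrite eq_sym.
have dbv : dotv b v = b ord0 i + s * b ord0 j.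
  rewrite /dotv (eq_bigr (fun k => b ord0 k * ((k == i)%:R + s * (k == j)%:R))).
    exact: sum_delta2.
  by move=> k _; rewrite mxE.
have svv : sqnorm v = 1 + s * s.
  rewrite /sqnorm /dotv (eq_bigr (fun k => v ord0 k * ((k == i)%:R + s * (k == j)%:R))).
    by rewrite sum_delta2 // vi vj.
  by move=> k _; rewrite [in X in _ * X]mxE.
have al0 : 2 * dotv b v * v ord0 i - sqnorm v * b ord0 i = 0.
  by rewrite dbv svv vi -hs; ring.
have [beta Hline] := ck_line a b lam A x v i.
have [t1 [t1p bd1]] := ray_exit (R:=R) oO bO Ox v0.
have nv0 : - v != 0 by rewrite oppr_eq0.
have [t2 [t2p bd2]] := ray_exit oO bO Ox nv0.
rewrite scalerN -scaleNr in bd2.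
have e1 := Hline t1; have e2 := Hline (- t2).
rewrite -!Hphi (Hb _ bd1) al0 mxE in e1.
rewrite -!Hphi (Hb _ bd2) al0 mxE in e2.
move: e1 e2; set g := phi x ord0 i => e1 e2.
have : g * (t1 + t2) = 0.
  have -> : g * (t1 + t2) = t2 * (0 * t1 ^+ 2 + beta * t1 + g)
            + t1 * (0 * (- t2) ^+ 2 + beta * (- t2) + g) by ring.
  by rewrite -e1 -e2; ring.
move/eqP; rewrite mulf_eq0 => /orP [/eqP //|]; rewrite gt_eqF //; lra.
Qed.
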